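(* For any $a,b\in S_Z$, the vertices $a$ and $b$ are not adjacent in $\Gamma$.
   Context: All graphs are finite and simple. A graph $G$ is a minimal prime graph complement if $G$ has at least $2$ vertices and: (1) the complement $\overline{G}$ is connected; (2) $G$ is triangle-free; (3) $G$ is $3$-colorable; (4) for any two distinct nonadjacent vertices $u,v$ of $G$, adding the edge $uv$ to $G$ yields a graph that either contains a triangle or is not $3$-colorable. Standing setup: $\Gamma$ is a minimal prime graph complement with a vertex $X$ of degree $2$, whose two neighbors are $A$ and $B$. Among the vertices of $\Gamma$ other than $X,A,B$: $S_A$ is the set of those adjacent to $A$ but not $B$; $S_B$ the set of those adjacent to $B$ but not $A$; $S_Y$ the set of those adjacent to both $A$ and $B$; $S_Z$ the set of those adjacent to neither $A$ nor $B$. *)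

(* Defs.v *)
From mathcomp Require Import all_boot.
Set Implicit Arguments. Unset Strict Implicit. Unset Printing Implicit Defensive.

Definition simple_graph (T : finType) (e : rel T) : Prop :=
  symmetric e /\ irreflexive e.

Definition compl_rel (T : finType) (e : rel T) : rel T :=
  fun x y => (x != y) && ~~ e x y.

Definition connected_graph (T : finType) (e : rel T) : Prop :=
  forall x y : T, connect e x y.

Definition triangle_free (T : finType) (e : rel T) : Prop :=
  forall x y z : T, ~ [&& e x y, e y z & e z x].

Definition three_colorable (T : finType) (e : rel T) : Prop :=
  exists f : T -> 'I_3, forall x y : T, e x y -> f x != f y.

Definition add_edge (T : finType) (e : rel T) (u v : T) : rel T :=
  fun x y => [|| e x y, (x == u) && (y == v) | (x == v) && (y == u)].

Definition minimal_prime_graph_complement (T : finType) (e : rel T) : Prop :=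
  simple_graph e /\ (1 < #|T|)%N /\
  [/\ connected_graph (compl_rel e),
      triangle_free e,
      three_colorable e &
      forall u v : T, u != v -> ~~ e u v ->
        ~ triangle_free (add_edge e u v) \/ ~ three_colorable (add_edge e u v)].

(* Main.v *)
Require Import Defs.
From mathcomp Require Import all_boot.

Lemma I3_pick (p q r : 'I_3) :
  (exists k : 'I_3, [&& k != p, k != q & k != r]) \/ [&& p != q, p != r & q != r].
Proof.
case: p => [[|[|[|p]]] Hp] //; case: q => [[|[|[|q]]] Hq] //;
case: r => [[|[|[|r]]] Hr] //;
first [ right; done
      | left; exists (Ordinal (isT : (0 < 3)%N)); done
      | left; exists (Ordinal (isT : (1 < 3)%N)); done
      | left; exists (Ordinal (isT : (2 < 3)%N)); done ].
Qed.

Lemma I3_eq (p q a b : 'I_3) : p != q -> a != p -> a != q -> b != p -> b != q -> a = b.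
Proof.
case: p => [[|[|[|p]]] Hp] //; case: q => [[|[|[|q]]] Hq] //;
case: a => [[|[|[|a]]] Ha] //; case: b => [[|[|[|b]]] Hb] //= *;
apply/val_inj => //.
Qed.

Theorem lemma7 (T : finType) (e : rel T) (X A B : T) :
  minimal_prime_graph_complement e ->
  A != B ->
  e X A -> e X B ->
  (forall w : T, e X w -> w = A \/ w = B) ->
  forall a b : T,
    [/\ a != X, a != A, a != B, ~~ e a A & ~~ e a B] ->
    [/\ b != X, b != A, b != B, ~~ e b A & ~~ e b B] ->
    ~~ e a b.
Proof.
move=> [[esym eirr] [_ [_ tf [f fP] minl]]] AB eXA eXB HX.
have key : forall c, [/\ c != X, c != A, c != B, ~~ e c A & ~~ e c B] ->
    [&& f A != f B, f A != f c & f B != f c].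
  move=> c [cX cA cB ncA ncB].
  have [[k /and3P [k1 k2 k3]]|//] := I3_pick (f A) (f B) (f c).
  have XcN : X != c by rewrite eq_sym.
  have nXc : ~~ e X c.
    apply/negP => /HX [] Ec; by move: cA cB; rewrite Ec eqxx.
  have [H|H] := minl X c XcN nXc; exfalso; apply: H.
  -
    have Hr : forall u v, add_edge e X c u v ->
        e u v \/ (u = X /\ v = c) \/ (u = c /\ v = X).
      move=> u v /or3P [E| /andP [/eqP -> /eqP ->] | /andP [/eqP -> /eqP ->]]; tauto.
    have L : forall x y z, add_edge e X c x y -> add_edge e X c y z ->
        add_edge e X c z x -> (x = X /\ y = c \/ x = c /\ y = X) -> False.
      have f1 : e X c = false by apply/negbTE.
      have f2 : e c X = false by rewrite esym; apply/negbTE.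
      have f3 : e X X = false by rewrite eirr.
      have f4 : e c c = false by rewrite eirr.
      have fin : forall z, e X z -> e c z -> False.
        move=> z /HX [] -> Ecz; [by move: ncA; rewrite Ecz | by move: ncB; rewrite Ecz].
      move=> x y z _ Hyz Hzx Hxy.
      case: Hxy => [[Ex Ey]|[Ex Ey]]; subst x y;
      case: (Hr _ _ Hyz) => [E1|[[E1 E1']|[E1 E1']]];
      case: (Hr _ _ Hzx) => [E2|[[E2 E2']|[E2 E2']]];
      try subst z; try (rewrite ?f1 ?f2 ?f3 ?f4 in E1); try (rewrite ?f1 ?f2 ?f3 ?f4 in E2); try done;
      try (by move: cX; rewrite ?E1 ?E1' ?E2 ?E2' eqxx);
      try (by move: XcN; rewrite ?E1 ?E1' ?E2 ?E2' eqxx);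
      try (by apply: (fin z); rewrite // esym).
    move=> x y z /and3P [Hxy Hyz Hzx].
    case: (Hr _ _ Hxy) => [E1|E1]; last by apply: (L x y z).
    case: (Hr _ _ Hyz) => [E2|E2]; last by apply: (L y z x).
    case: (Hr _ _ Hzx) => [E3|E3]; last by apply: (L z x y).
    by apply: (tf x y z); rewrite E1 E2 E3.
  - exists (fun v => if v == X then k else f v) => x y /or3P [Exy|/andP [/eqP Ex /eqP Ey]|/andP [/eqP Ex /eqP Ey]].
    + rewrite /=; case: (eqVneq x X) => [Ex|xX].
      subst x.
      * have Ey : y != X by apply/negP => /eqP Ey; move: Exy; rewrite Ey eirr.
        by rewrite (negbTE Ey); case: (HX _ Exy) => ->.
      * case: (eqVneq y X) => [Ey|yX].
        - subst y; case: (HX x); [by rewrite esym|move=> ->|move=> ->]; by rewrite eq_sym.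
        - by apply: fP.
    + subst x y; have cXf : (c == X) = false by exact: negbTE.
      have XX : (X == X) = true by apply/eqP.
      rewrite /= cXf XX.
      by apply/negP => /eqP Ek; move: k3; rewrite Ek eqxx.
    + subst x y; have cXf : (c == X) = false by exact: negbTE.
      have XX : (X == X) = true by apply/eqP.
      rewrite /= cXf XX.
      by apply/negP => /eqP Ek; move: k3; rewrite Ek eqxx.
move=> a b Ha Hb; apply/negP => Eab.
move: (key a Ha) (key b Hb) => /and3P [P1 P2 P3] /and3P [_ Q2 Q3].
have := fP a b Eab; rewrite (@I3_eq (f A) (f B) (f a) (f b) P1) ?eqxx // ?(eq_sym (f a)) ?(eq_sym (f b)) // eq_sym.
Qed.
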